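(* Fix $V$ and $k\ge1$. For densities $\rho\in\{n/V: n=0,1,2,\dots\}$, the canonical expectation $\rho\mapsto\langle\exp(-\lambda N_k)\rangle^{C}_V(\rho)$ is a monotonically decreasing function of $\rho$ for every $\lambda>0$, and for every integer $r\ge1$ the moment $\rho\mapsto\langle N_k^r\rangle^{C}_V(\rho)$ is a monotonically increasing function of $\rho$.
   Context: Fix exponents $\alpha_1\ge\alpha_2\ge\alpha_3>0$ with $\alpha_1+\alpha_2+\alpha_3=1$ and let $\Lambda_V=\{x\in\mathbb{R}^3:0\le x_j\le V^{\alpha_j}\}$. The one-particle Hamiltonian $t_V$ is $-\Delta/2$ on $L^2(\Lambda_V)$ with Dirichlet boundary conditions, with eigenvalues $E_1(V)<E_2(V)\le\dots$ (these are $\frac{\pi^2}{2}\sum_j n_j^2V^{-2\alpha_j}$, $n_j\ge1$). For the perfect Bose gas at inverse temperature $\beta>0$, $T_V^{(n)}$ is the $n$-particle free Hamiltonian (generated by $t_V$) on the symmetric $n$-particle space, $Z_V(n)=\mathrm{Tr}\,e^{-\beta T_V^{(n)}}$ ($Z_V(0)=1$), and the canonical state at density $\rho=n/V$ is $\langle\cdot\rangle^C_V(\rho)=Z_V(n)^{-1}\mathrm{Tr}(\cdot\,e^{-\beta T_V^{(n)}})$. $N_k$ is the occupation number of the $k$-th one-particle eigenstate (a commuting family, treated as random variables). *)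

(* Defs.v *)
From HB Require Import structures.
From mathcomp Require Import all_boot all_order all_algebra.
From mathcomp Require Import all_classical all_reals all_analysis.
From mathcomp Require Import finmap multiset.
Set Implicit Arguments. Unset Strict Implicit. Unset Printing Implicit Defensive.
Import Order.TTheory GRing.Theory Num.Theory.
Local Open Scope ring_scope.

(* One-particle eigenstates of t_V (Dirichlet -Delta/2 on the box Lambda_V)
   are labelled by triples of quantum numbers (n1,n2,n3), n_j >= 1.
   We encode n_j = j_j + 1 with (j1,j2,j3) : nat * nat * nat. *)
Definition mode := (nat * nat * nat)%type.

Definition eigE {R : realType} (a1 a2 a3 V : R) (k : mode) : R :=
  (pi ^+ 2 / 2) *
  ((k.1.1.+1%:R) ^+ 2 * V `^ (- (2 * a1)) +
   (k.1.2.+1%:R) ^+ 2 * V `^ (- (2 * a2)) +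
   (k.2.+1%:R) ^+ 2 * V `^ (- (2 * a3))).

(* An orthonormal eigenbasis of the symmetric n-particle space is indexed by
   multisets of modes of total size n; the multiplicity [m k] is the
   occupation number N_k of that basis vector. *)
Definition nparticles (m : multiset mode) : nat :=
  (\sum_(k <- finsupp m) m k)%N.

Definition energy {R : realType} (a1 a2 a3 V : R) (m : multiset mode) : R :=
  \sum_(k <- finsupp m) (m k)%:R * eigE a1 a2 a3 V k.

Local Open Scope ereal_scope.

(* Tr (F(N) e^{-beta T_V^(n)}) for a nonnegative function F of the occupation
   numbers: sum over the eigenbasis of the n-particle symmetric space. *)
Definition ctrace {R : realType} (a1 a2 a3 V beta : R) (n : nat)
  (F : multiset mode -> R) : \bar R :=
  \esum_(m in [set m : multiset mode | nparticles m = n])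
     (F m * expR (- beta * energy a1 a2 a3 V m))%:E.

Definition Zcan {R : realType} (a1 a2 a3 V beta : R) (n : nat) : \bar R :=
  ctrace a1 a2 a3 V beta n (fun _ => 1%R).

Local Close Scope ereal_scope.

Definition cexp {R : realType} (a1 a2 a3 V beta : R) (n : nat) (k : mode)
  (f : nat -> R) : R :=
  fine (ctrace a1 a2 a3 V beta n (fun m => f (m k))) /
  fine (Zcan a1 a2 a3 V beta n).

(* Main.v *)
Require Import Defs.
From HB Require Import structures.
From mathcomp Require Import all_boot all_order all_algebra.
From mathcomp Require Import all_classical all_reals all_analysis.
From mathcomp Require Import finmap multiset.
From mathcomp Require Import ring lra.
Import Order.TTheory GRing.Theory Num.Theory.
Set Implicit Arguments. Unset Strict Implicit. Unset Printing Implicit Defensive.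
Local Open Scope ring_scope.

Section MS.
Variable T : choiceType.
Implicit Types m : multiset T.

Definition npart m : nat := (\sum_(k <- finsupp m) m k)%N.

Lemma npart_sup m (S : {fset T}) : fsubset (finsupp m) S ->
  npart m = (\sum_(k <- S) m k)%N.
Proof.
move=> sub; rewrite /npart (big_fset_incl _ sub) // => x _ xn.
by rewrite fsfun_dflt.
Qed.

Definition madd a m : multiset T := msetD (msetn 1 a) m.

Lemma maddE a m b : madd a m b = ((b == a) + m b)%N.
Proof. exact: mset1DE. Qed.

Lemma supp_madd a m : fsubset (finsupp (madd a m)) (a |` finsupp m)%fset.
Proof.
apply/fsubsetP => k; rewrite mem_finsupp maddE !inE mem_finsupp.
by case: (k == a) => //=; rewrite add0n.
Qed.

Lemma supp_sub_madd a m : fsubset (finsupp m) (a |` finsupp m)%fset.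
Proof. by apply/fsubsetP => k kin; rewrite !inE kin orbT. Qed.

Lemma npart_madd a m : npart (madd a m) = (npart m).+1.
Proof.
rewrite (npart_sup (supp_madd a m)) (npart_sup (supp_sub_madd a m)).
under eq_bigr do rewrite maddE.
rewrite big_split /= (big_fsetD1 a) ?inE ?eqxx //= big1_fset //.
by move=> i; rewrite !inE => /andP[/negPf -> _].
Qed.

Variable R : realType.

Definition en (e : T -> R) m : R := \sum_(k <- finsupp m) (m k)%:R * e k.

Lemma en_sup e m (S : {fset T}) : fsubset (finsupp m) S ->
  en e m = \sum_(k <- S) (m k)%:R * e k.
Proof.
move=> sub; rewrite /en (big_fset_incl _ sub) // => x _ xn.
by rewrite fsfun_dflt // mul0r.
Qed.

Lemma en_madd e a m : en e (madd a m) = e a + en e m.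
Proof.
rewrite (en_sup e (supp_madd a m)) (en_sup e (supp_sub_madd a m)).
under eq_bigr do rewrite maddE natrD mulrDl.
rewrite big_split /= (big_fsetD1 a) ?inE ?eqxx //= big1_fset ?addr0 ?mul1r //.
by move=> i; rewrite !inE => /andP[/negPf -> _]; rewrite mul0r.
Qed.

Lemma npart0 m : npart m = 0%N -> m = mset0.
Proof.
move=> /eqP; rewrite /npart sum_nat_seq_eq0 => /allP H.
apply/msetP => k; rewrite mset0E.
case: finsuppP => // kin; by move: (H k kin) => /= /eqP.
Qed.

Lemma supp_mset0 : finsupp (mset0 : multiset T) = fset0.
Proof.
by apply/fsetP => k; rewrite mem_finsupp mset0E !inE.
Qed.

Lemma npart_mset0 : npart (mset0 : multiset T) = 0%N.
Proof. by rewrite /npart supp_mset0 big_seq_fset0. Qed.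

Lemma en_mset0 e : en e mset0 = 0.
Proof. by rewrite /en supp_mset0 big_seq_fset0. Qed.

End MS.

Section ES.
Variable T : choiceType.
Variable R : realType.
Implicit Types (P Q : T -> bool) (G : multiset T -> R).

Lemma esumZ (U : choiceType) (S : set U) (a : U -> R) (c : R) :
  0 <= c -> (forall u, 0 <= a u) ->
  \esum_(u in S) (c * a u)%:E = (c%:E * \esum_(u in S) (a u)%:E)%E.
Proof.
move=> c0 a0; have [->|cn0] := eqVneq c 0.
  by rewrite mul0e esum1 // => u _; rewrite mul0r.
have cp : 0 < c by rewrite lt0r cn0.
rewrite /esum -ereal_sup_pZl //; congr ereal_sup.
apply/seteqP; split => x /=.
- move=> [A [finA AS] <-]; exists (\sum_(u \in A) (a u)%:E)%E.
    by exists A.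
  rewrite fsbig_finite // fsbig_finite // ge0_sume_distrr => [|u _]; last by rewrite lee_fin.
  by apply: eq_bigr => u _; rewrite EFinM.
- move=> [y [A [finA AS] <-] <-]; exists A => //.
  rewrite fsbig_finite // fsbig_finite // ge0_sume_distrr => [|u _]; last by rewrite lee_fin.
  by apply: eq_bigr => u _; rewrite EFinM.
Qed.

Definition Dn (P : T -> bool) n :=
  (fun m : multiset T => npart m = n /\ (forall k, k \in finsupp m -> P k)) : set (multiset T).

Definition Psi (P : T -> bool) n (G : multiset T -> R) : \bar R :=
  \esum_(m in Dn P n) (G m)%:E.

Lemma Psi_ext P Q n G : P =1 Q -> Psi P n G = Psi Q n G.
Proof.
move=> PQ; rewrite /Psi; congr esum; apply/seteqP; split => m [h1 h2];
  by split => // k /h2; rewrite PQ.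
Qed.

Lemma Psi_ge0 P n G : (forall m, 0 <= G m) -> (0 <= Psi P n G)%E.
Proof. by move=> G0; apply: esum_ge0 => m _; rewrite lee_fin. Qed.

Lemma Psi_le P Q n G : (forall k, P k -> Q k) -> (forall m, 0 <= G m) ->
  (Psi P n G <= Psi Q n G)%E.
Proof.
move=> PQ G0; rewrite /Psi /esum; apply: ge_ereal_sup => x [A [finA AS] <-].
apply: ereal_sup_ubound; exists A => //; split => // m /AS [h1 h2].
by split => // k /h2 /PQ.
Qed.

Lemma PsiZ P n G c : 0 <= c -> (forall m, 0 <= G m) ->
  Psi P n (fun m => c * G m) = (c%:E * Psi P n G)%E.
Proof. by move=> c0 G0; rewrite /Psi esumZ. Qed.

Lemma Dn0 P : Dn P 0 = [set mset0]%classic.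
Proof.
apply/seteqP; split => m /=.
- by move=> [/npart0 -> _].
- move=> ->; split; first exact: npart_mset0.
  by move=> k; rewrite supp_mset0 inE.
Qed.

Lemma Psi0 P G : 0 <= G mset0 -> Psi P 0 G = (G mset0)%:E.
Proof. by move=> G0; rewrite /Psi Dn0 esum_set1 // lee_fin. Qed.

Lemma Psi_nil n G : Psi (fun _ => false) n.+1 G = 0%E.
Proof.
rewrite /Psi esum1 // => m [h1 h2].
have : m = mset0.
  apply/msetP => k; rewrite mset0E; case: finsuppP => // /h2 //.
by move=> mE; move: h1; rewrite mE npart_mset0.
Qed.

Lemma Psi_split P a n G : P a -> (forall m, 0 <= G m) ->
  Psi P n.+1 G = (Psi (fun k => P k && (k != a)) n.+1 G +
                  Psi P n (fun m => G (madd a m)))%E.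
Proof.
move=> Pa G0; rewrite /Psi (esumID ((fun m : multiset T => m a = 0%N) : set _)); last first.
  by move=> m _; rewrite lee_fin.
congr (_ + _)%E.
- congr esum; apply/seteqP; split => m /=.
  + move=> [[h1 h2] h3]; split => // k kin; rewrite h2 //=.
    apply/eqP => ka; move: kin; rewrite mem_finsupp ka h3 eqxx //.
  + move=> [h1 h2]; split; first (split => // k /h2 /andP[] //).
    apply/eqP; rewrite -[_ == _]negbK -[(m a != 0)%N]/(m a != 0%N :> nat).
    apply/negP => ma; have := h2 a; rewrite mem_finsupp ma eqxx andbF.
    by move=> /(_ isT).
- apply: reindex_esum; split.
  + move=> m [h1 h2] /=; split; first split.
    * by rewrite npart_madd h1.
    * move=> k /(fsubsetP (supp_madd a m)); rewrite !inE => /orP[/eqP -> //|].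
      exact: h2.
    * by rewrite maddE eqxx.
  + move=> m1 m2 _ _ /= h; apply/msetP => k.
    by move/msetP: h => /(_ k); rewrite !maddE => /eqP; rewrite eqn_add2l => /eqP.
  + move=> m /= [[h1 h2] h3].
    have ain : a \in (m : {mset T})%mset by rewrite -msuppE mem_finsupp; apply/eqP.
    have mE : madd a (msetB m (msetn 1 a)) = m by rewrite /madd msetB1K.
    exists (msetB m (msetn 1 a)) => //; split.
    * by apply/eqP; rewrite -eqSS -(npart_madd a) mE h1.
    * move=> k kin; apply: h2; move: kin; rewrite !mem_finsupp msetB1E.
      by apply: contraNneq => ->.
Qed.

End ES.

Section ZR.
Variable T : eqType.
Variable R : realType.
Variable x : T -> R.
Hypothesis xpos : forall a, 0 < x a.

Fixpoint zr (s : seq T) (n : nat) : R :=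
  match s with
  | [::] => (n == 0)%:R
  | a :: s' => \sum_(j < n.+1) x a ^+ j * zr s' (n - j)
  end.

Lemma zr0 s : zr s 0 = 1.
Proof.
case: s => [|a s] //=; rewrite big_ord1 expr0 mul1r subnn.
by elim: s a => [|b s IH] a //=; rewrite big_ord1 expr0 mul1r subnn IH.
Qed.

Lemma zr_rec a s n : zr (a :: s) n.+1 = zr s n.+1 + x a * zr (a :: s) n.
Proof.
rewrite /= big_ord_recl expr0 mul1r subn0; congr (_ + _).
rewrite mulr_sumr; apply: eq_bigr => j _.
by rewrite /bump /= ?add1n subSS exprS mulrA.
Qed.

Lemma zr_ge0 s n : 0 <= zr s n.
Proof.
elim: s n => [|a s IH] n /=; first by case: (n == 0).
apply: sumr_ge0 => j _; apply: mulr_ge0 => //.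
by apply: exprn_ge0; apply: ltW.
Qed.

Lemma zr_pos a s n : 0 < zr (a :: s) n.
Proof.
rewrite /= big_ord_recr /= subnn zr0 mulr1.
apply: ltr_wpDl; last by apply: exprn_gt0.
apply: sumr_ge0 => j _; apply: mulr_ge0 => //; first by apply: exprn_ge0; apply: ltW.
exact: zr_ge0.
Qed.

Definition QP (A : nat -> R) := forall a b, (a <= b)%N -> A a * A b.+1 <= A a.+1 * A b.

Lemma QP_of_LC (A : nat -> R) : (forall n, 0 < A n) ->
  (forall n, A n * A n.+2 <= A n.+1 ^+ 2) -> QP A.
Proof.
move=> Ap LC a b /subnKC <-; elim: (b - a)%N => [|d IH].
  by rewrite addn0 mulrC.
rewrite addnS.
have h1 := LC (a + d)%N.
have p1 := Ap (a + d)%N; have p2 := Ap (a + d).+1.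
have p3 := Ap a; have p4 := Ap a.+1; have p5 := Ap (a + d).+2.
rewrite -(@ler_pM2r _ (A (a + d)%N * A (a + d).+1)); last by apply: mulr_gt0.
have e1 : A a * A (a + d).+2 * (A (a + d)%N * A (a + d).+1) =
   (A a * A (a + d).+1) * (A (a + d)%N * A (a + d).+2) by ring.
have e2 : A a.+1 * A (a + d).+1 * (A (a + d)%N * A (a + d).+1) =
   (A a.+1 * A (a + d)%N) * (A (a + d).+1 ^+ 2) by ring.
rewrite e1 e2; apply: ler_pM => //.
- by apply: mulr_ge0; apply: ltW.
- by apply: mulr_ge0; apply: ltW.
Qed.

Lemma zr_QP s : QP (zr s).
Proof.
elim: s => [|a s IH].
  move=> i j _ /=; case: (j.+1 == 0)%N; case: (i == 0)%N => /=;
  by rewrite ?mulr0 ?mul0r ?mulr1 ?mul1r.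
apply: QP_of_LC; first exact: zr_pos.
move=> n; set H := zr (a :: s); set A := zr s.
have eH : H n.+2 = A n.+2 + x a * H n.+1 by rewrite /H zr_rec.
have key : H n * A n.+2 <= H n.+1 * A n.+1.
  rewrite /H /= [in X in _ <= X]big_ord_recr /= mulrDl mulr_suml mulr_suml.
  rewrite -[X in X <= _]addr0; apply: lerD; last first.
    apply: mulr_ge0; last exact: zr_ge0.
    apply: mulr_ge0; last exact: zr_ge0.
    by apply: exprn_ge0; apply: ltW.
  apply: ler_sum => j _.
  rewrite -!mulrA; apply: ler_wpM2l; first by apply: exprn_ge0; apply: ltW.
  have jn : (j <= n)%N by rewrite -ltnS.
  rewrite subSn //; exact: IH (leqW (leq_subr j n)).
rewrite eH; have Hp := zr_pos a s n; have Hp1 := zr_pos a s n.+1.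
have e : H n.+1 ^+ 2 = H n.+1 * (A n.+1 + x a * H n) by rewrite /H zr_rec expr2.
rewrite e; nra.
Qed.

Lemma zr_sum_bound a s N : x a < 1 ->
  \sum_(n < N) zr (a :: s) n <= (\sum_(n < N) zr s n) / (1 - x a).
Proof.
move=> xa1; rewrite ler_pdivlMr ?subr_gt0 //.
case: N => [|N]; first by rewrite !big_ord0 mul0r.
set H := zr (a :: s); set A := zr s.
have eq1 : \sum_(n < N.+1) H n = \sum_(n < N.+1) A n + x a * \sum_(n < N) H n.
  rewrite big_ord_recl [in RHS]big_ord_recl /H /A !zr0 -addrA; congr (_ + _).
  rewrite mulr_sumr -big_split; apply: eq_bigr => i _.
  by rewrite (_ : (lift ord0 i : nat) = i.+1) ?zr_rec.
have le2 : \sum_(n < N) H n <= \sum_(n < N.+1) H n.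
  rewrite big_ord_recr /= lerDl; exact: zr_ge0.
have xp := xpos a.
move: eq1 le2; set SH := \sum_(n < N.+1) H n; set SH' := \sum_(n < N) H n.
set SA := \sum_(n < N.+1) A n; move=> eq1 le2; nra.
Qed.

Lemma zr_sum_prod s N : (forall a, a \in s -> x a < 1) ->
  \sum_(n < N) zr s n <= \prod_(a <- s) (1 - x a)^-1.
Proof.
elim: s => [|a s IH] H.
  rewrite big_nil; case: N => [|N]; first by rewrite big_ord0.
  rewrite big_ord_recl /= big1 ?addr0 // => i _; by [].
rewrite big_cons; apply: (le_trans (zr_sum_bound s N (H a (mem_head _ _)))).
rewrite mulrC ler_wpM2l //.
  by rewrite invr_ge0 subr_ge0 ltW // H // mem_head.
by apply: IH => b bs; apply: H; rewrite inE bs orbT.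
Qed.

Lemma prod_exp_bound s q : q < 1 -> (forall a, a \in s -> x a <= q) ->
  \prod_(a <- s) (1 - x a)^-1 <= expR ((\sum_(a <- s) x a) / (1 - q)).
Proof.
move=> q1; elim: s => [|a s IH] H; first by rewrite !big_nil mul0r expR0.
rewrite !big_cons mulrDl expRD.
have xa := H a (mem_head _ _); have xp := xpos a.
apply: ler_pM.
- by rewrite invr_ge0 subr_ge0; apply: ltW; apply: le_lt_trans q1.
- rewrite big_seq; apply: prodr_ge0 => b bs; rewrite invr_ge0 subr_ge0; apply: ltW.
  by apply: (@le_lt_trans _ _ q) => //; apply: H; rewrite inE bs orbT.
- apply: le_trans (expR_ge1Dx _).
  have h1 : 0 < 1 - x a by rewrite subr_gt0; apply: le_lt_trans q1.
  have h2 : 0 < 1 - q by rewrite subr_gt0.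
  rewrite -(@ler_pM2r _ (1 - x a)) // mulVf ?gt_eqF //.
  rewrite -(@ler_pM2r _ (1 - q)) // mul1r.
  have e : (1 + x a / (1 - q)) * (1 - x a) * (1 - q) =
           (1 - q + x a) * (1 - x a) by field; rewrite gt_eqF.
  rewrite e; nra.
- by apply: IH => b bs; apply: H; rewrite inE bs orbT.
Qed.

End ZR.

Section W.
Variable T : choiceType.
Variable R : realType.
Variable e : T -> R.
Variable beta : R.

Definition xw (a : T) : R := expR (- beta * e a).
Definition W (m : multiset T) : R := expR (- beta * en e m).

Lemma xw_pos a : 0 < xw a. Proof. exact: expR_gt0. Qed.
Lemma W_ge0 m : 0 <= W m. Proof. exact: expR_ge0. Qed.
Lemma W_mset0 : W mset0 = 1. Proof. by rewrite /W en_mset0 mulr0 expR0. Qed.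
Lemma W_madd a m : W (madd a m) = xw a * W m.
Proof. by rewrite /W en_madd mulrDr expRD. Qed.

Lemma Zs_zr s : uniq s -> forall n,
  Psi (fun k => k \in s) n W = (zr xw s n)%:E.
Proof.
elim: s => [|a s IH].
  move=> _ [|n].
    rewrite Psi0; last exact: W_ge0.
    by rewrite W_mset0 zr0.
  by rewrite (@Psi_ext _ _ _ (fun _ => false)) // Psi_nil.
move=> /andP[nas us]; elim => [|n IHn].
  rewrite Psi0; last exact: W_ge0.
  by rewrite W_mset0 zr0.
rewrite zr_rec (@Psi_split _ _ _ a) ?mem_head //; last exact: W_ge0.
rewrite (@Psi_ext _ _ _ (fun k => k \in s)); last first.
  by move=> k; rewrite inE; case: (k =P a) => [->|_] /=; rewrite ?(negPf nas) ?andbT.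
rewrite IH // EFinD; congr (_ + _)%E.
transitivity (Psi (fun k => k \in a :: s) n (fun m => xw a * W m)).
  by congr Psi; apply: funext => m; rewrite W_madd.
rewrite PsiZ; [by rewrite IHn EFinM | exact: ltW (xw_pos a) | exact: W_ge0].
Qed.

Lemma fin_supp_seq (A : set (multiset T)) : finite_set A ->
  exists s : seq T, uniq s /\ forall m, A m -> forall k, k \in finsupp m -> k \in s.
Proof.
move=> finA; exists (undup (flatten [seq (finsupp m : seq T) | m <- fset_set A])).
split; first exact: undup_uniq.
move=> m Am k kin; rewrite mem_undup; apply/flattenP.
exists (finsupp m : seq T) => //; apply/mapP; exists m => //.
by rewrite in_fset_set // mem_set.
Qed.

Lemma Psi_sup_bound n (B : \bar R) :
  (forall s, uniq s -> (Psi (fun k => k \in s) n W <= B)%E) ->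
  (Psi (fun _ => true) n W <= B)%E.
Proof.
move=> H; rewrite /Psi /esum; apply: ge_ereal_sup => _ [A [finA AS] <-].
have [s [us hs]] := fin_supp_seq finA.
apply: le_trans (H s us); apply: ereal_sup_ubound; exists A => //.
split => // m Am; split; [by case: (AS m Am) | exact: hs].
Qed.

Lemma Psi_sup_approx n (y : \bar R) : (y < Psi (fun _ => true) n W)%E ->
  exists s, uniq s /\ (y < Psi (fun k => k \in s) n W)%E.
Proof.
rewrite /Psi /esum => /ereal_sup_gt [_ [A [finA AS] <-] lt].
have [s [us hs]] := fin_supp_seq finA.
exists s; split => //; apply: lt_le_trans lt _; apply: ereal_sup_ubound.
exists A => //; split => // m Am; split; [by case: (AS m Am) | exact: hs].
Qed.

End W.

Section Lim.
Variable T : choiceType.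
Variable R : realType.
Variable e : T -> R.
Variable beta : R.
Variable B : R.
Hypothesis Hb : forall s, uniq s -> forall n, zr (xw e beta) s n <= B.

Let Z n := Psi (fun _ => true) n (W e beta).
Definition zz n := fine (Psi (fun _ => true) n (W e beta)).

Lemma Z_fin n : Z n \is a fin_num.
Proof.
rewrite ge0_fin_numE; last exact: Psi_ge0 (@W_ge0 _ _ e beta).
apply: (@le_lt_trans _ _ B%:E); last exact: ltry.
apply: Psi_sup_bound => s us; rewrite Zs_zr //; rewrite lee_fin; exact: Hb.
Qed.

Lemma ZE n : Z n = (zz n)%:E.
Proof. by rewrite /zz fineK //; exact: Z_fin. Qed.

Lemma zr_mono s1 s2 n : uniq s1 -> uniq s2 -> {subset s1 <= s2} ->
  zr (xw e beta) s1 n <= zr (xw e beta) s2 n.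
Proof.
move=> u1 u2 sub; rewrite -lee_fin -!Zs_zr //.
apply: Psi_le; [by move=> k /sub | exact: W_ge0].
Qed.

Lemma zr_le_zz s n : uniq s -> zr (xw e beta) s n <= zz n.
Proof.
move=> us; rewrite -lee_fin -ZE -Zs_zr //.
apply: Psi_le => //; exact: W_ge0.
Qed.

Lemma zz_ge0 n : 0 <= zz n.
Proof. by rewrite -lee_fin -ZE; exact: Psi_ge0 (@W_ge0 _ _ e beta). Qed.

Lemma zz_pos (a : T) n : 0 < zz n.
Proof.
apply: (@lt_le_trans _ _ (zr (xw e beta) [:: a] n)).
  apply: zr_pos; exact: xw_pos.
exact: zr_le_zz.
Qed.

Lemma zz_approx n eps : 0 < eps -> exists s, uniq s /\ zz n - eps < zr (xw e beta) s n.
Proof.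
move=> ep.
have : ((zz n - eps)%:E < Z n)%E by rewrite ZE lte_fin ltrBlDr ltrDl.
move=> /Psi_sup_approx [s [us lt]]; exists s; split => //.
by move: lt; rewrite Zs_zr // lte_fin.
Qed.

Lemma zz_QP : QP zz.
Proof.
move=> a b ab; apply/ler_addgt0Pr => eps ep.
set C := zz a + zz b.+1.
have C0 : 0 <= C by apply: addr_ge0; exact: zz_ge0.
set d := eps / (C + 1).
have dp : 0 < d by apply: divr_gt0 => //; lra.
have [s1 [u1 h1]] := zz_approx a dp.
have [s2 [u2 h2]] := zz_approx b.+1 dp.
set s := undup (s1 ++ s2).
have us : uniq s by exact: undup_uniq.
have sub1 : {subset s1 <= s} by move=> k ks; rewrite mem_undup mem_cat ks.
have sub2 : {subset s2 <= s} by move=> k ks; rewrite mem_undup mem_cat ks orbT.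
have g1 := zr_mono a u1 us sub1.
have g2 := zr_mono b.+1 u2 us sub2.
have q := zr_QP (@xw_pos _ _ e beta) s ab.
have l1 := zr_le_zz a us; have l2 := zr_le_zz b.+1 us.
have l3 := zr_le_zz a.+1 us; have l4 := zr_le_zz b us.
have p1 := zr_ge0 (@xw_pos _ _ e beta) s a.
have p2 := zr_ge0 (@xw_pos _ _ e beta) s b.+1.
have p3 := zr_ge0 (@xw_pos _ _ e beta) s a.+1.
have p4 := zr_ge0 (@xw_pos _ _ e beta) s b.
have z1 := zz_ge0 a; have z2 := zz_ge0 b.+1.
have z3 := zz_ge0 a.+1; have z4 := zz_ge0 b.
have dC : d * C <= eps.
  rewrite /d mulrAC ler_pdivrMr; last lra.
  rewrite ler_pM2l //; lra.
move: g1 g2 h1 h2 q l1 l2 l3 l4 p1 p2 p3 p4 z1 z2 z3 z4 dC.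
rewrite /C.
set A1 := zz a; set A2 := zz b.+1; set A3 := zz a.+1; set A4 := zz b.
set r1 := zr _ s a; set r2 := zr _ s b.+1; set r3 := zr _ s a.+1; set r4 := zr _ s b.
set t1 := zr _ s1 a; set t2 := zr _ s2 b.+1.
move=> *.
have k1 : A1 * A2 <= r1 * r2 + d * (A1 + A2) by nra.
have k2 : r3 * r4 <= A3 * A4 by apply: ler_pM.
lra.
Qed.

End Lim.

Definition Df {R : realType} (f : nat -> R) (j : nat) : R :=
  if j is j'.+1 then f j - f j' else f 0%N.

Section Mono.
Variable R : realType.
Variable z : nat -> R.
Hypothesis zpos : forall n, 0 < z n.
Hypothesis zQ : QP z.
Variable x : R.
Hypothesis xpos : 0 < x.

Definition Cx n (g : nat -> R) := (\sum_(j < n.+1) Df g j * x ^+ j * z (n - j)) / z n.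

Lemma Cx_mono n g : (forall j, 0 <= Df g j.+1) -> Cx n g <= Cx n.+1 g.
Proof.
move=> Dg; rewrite /Cx [in X in _ <= X]big_ord_recr /= mulrDl.
rewrite -[X in X <= _]addr0; apply: lerD; last first.
  apply: divr_ge0; last exact: ltW.
  apply: mulr_ge0; [apply: mulr_ge0; [exact: (Dg n)| apply: exprn_ge0; exact: ltW] | exact: ltW].
rewrite mulr_suml [X in _ <= X]mulr_suml; apply: ler_sum => j _.
have jn : (j <= n)%N by rewrite -ltnS.
rewrite -!mulrA; case: (nat_of_ord j) jn => [|j'] jn.
  by rewrite !subn0 !divff ?gt_eqF.
apply: ler_wpM2l => //; apply: ler_wpM2l; first by apply: exprn_ge0; exact: ltW.
rewrite ler_pdivrMr // mulrAC ler_pdivlMr //.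
rewrite subSn //; exact: zQ (leq_subr _ _).
Qed.

Lemma Cx_opp n f : Cx n (fun j => - f j) = - Cx n f.
Proof.
rewrite /Cx -mulNr -sumrN; congr (_ / _); apply: eq_bigr => j _.
by case: (nat_of_ord j) => [|j'] /=; rewrite -?opprD ?mulNr // opprB addrC.
Qed.

Lemma Cx_chain g n1 n2 : (n1 <= n2)%N -> (forall j, 0 <= Df g j.+1) ->
  Cx n1 g <= Cx n2 g.
Proof.
move=> /subnKC <- Dg; elim: (n2 - n1)%N => [|d IH]; first by rewrite addn0.
by apply: le_trans IH _; rewrite addnS; apply: Cx_mono.
Qed.

End Mono.

Lemma Psi_eq_in (T : choiceType) (R : realType) (P : T -> bool) n (G G' : multiset T -> R) :
  (forall m, Dn P n m -> G m = G' m) -> Psi P n G = Psi P n G'.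
Proof. by move=> h; apply: eq_esum => m /h ->. Qed.

Section Exp.
Variable T : choiceType.
Variable R : realType.
Variable e : T -> R.
Variable beta : R.
Variable B : R.
Hypothesis Hb : forall s, uniq s -> forall n, zr (xw e beta) s n <= B.
Variable k0 : T.

Let x := xw e beta k0.
Let z := zz e beta.
Definition Phi n (f : nat -> R) :=
  Psi (fun _ => true) n (fun m => f (m k0) * W e beta m).

Let Y n := Psi (fun k => true && (k != k0)) n (W e beta).

Lemma ZE' n : Psi (fun _ => true) n (W e beta) = (z n)%:E.
Proof. exact: ZE Hb n. Qed.

Lemma zz0 : z 0 = 1.
Proof. by rewrite /z /zz Psi0 ?W_mset0 //; exact: W_ge0. Qed.

Lemma Yrec n : Y n.+1 = (z n.+1 - x * z n)%:E.
Proof.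
have h : (z n.+1)%:E = (Y n.+1 + (x * z n)%:E)%E.
  rewrite -ZE' /Y (@Psi_split _ _ _ k0) //; last exact: W_ge0.
  congr (_ + _)%E.
  transitivity (Psi (fun _ => true) n (fun m => x * W e beta m)).
    by congr Psi; apply: funext => m; rewrite W_madd.
  rewrite PsiZ; [by rewrite ZE' | exact: ltW (xw_pos _ _ _) | exact: W_ge0].
have Yf : Y n.+1 \is a fin_num.
  rewrite ge0_fin_numE; last exact: Psi_ge0 (@W_ge0 _ _ e beta).
  apply: (@le_lt_trans _ _ (z n.+1)%:E); last exact: ltry.
  rewrite -ZE'; apply: Psi_le => //; exact: W_ge0.
have hY : Y n.+1 = (fine (Y n.+1))%:E by rewrite fineK.
rewrite hY; rewrite hY -EFinD in h.
have h2 := EFin_inj h.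
by congr (_%:E); rewrite h2 addrK.
Qed.

Lemma Phi_rec n f : (forall j, 0 <= f j) ->
  Phi n.+1 f = ((f 0%N * (z n.+1 - x * z n))%:E + x%:E * Phi n (fun j => f j.+1))%E.
Proof.
move=> f0; rewrite /Phi (@Psi_split _ _ _ k0) //; last first.
  by move=> m; apply: mulr_ge0 => //; exact: W_ge0.
congr (_ + _)%E.
  rewrite (@Psi_eq_in _ _ _ _ _ (fun m => f 0%N * W e beta m)); last first.
    move=> m [_ h]; congr (f _ * _); apply/eqP; rewrite -[_ == _]negbK.
    apply/negP => nz; have := h k0; rewrite mem_finsupp nz eqxx.
    by move=> /(_ isT).
  rewrite PsiZ; [by rewrite (_ : Psi _ n.+1 _ = Y n.+1) // Yrec EFinM | exact: f0 | exact: W_ge0].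
transitivity (Psi (fun _ => true) n (fun m => x * (f (m k0).+1 * W e beta m))).
  congr Psi; apply: funext => m; rewrite W_madd maddE eqxx add1n /x; ring.
rewrite PsiZ //; [exact: ltW (xw_pos _ _ _) | by move=> m; apply: mulr_ge0 => //; exact: W_ge0].
Qed.

Lemma Phi_closed n f : (forall j, 0 <= f j) ->
  Phi n f = (\sum_(j < n.+1) Df f j * x ^+ j * z (n - j)%N)%:E.
Proof.
elim: n f => [|n IH] f f0.
  rewrite /Phi Psi0; last by apply: mulr_ge0 => //; exact: W_ge0.
  by rewrite big_ord1 W_mset0 mset0E /= zz0 !mulr1.
rewrite Phi_rec // IH // -EFinM -EFinD; congr (_%:E).
rewrite [in RHS]big_ord_recl /= subn0 expr0 mulr1.
rewrite big_ord_recl /= subn0 expr0 mulr1 mulrDr.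
have e1 : \sum_(i < n) Df (fun j => f j.+1) (lift ord0 i) * x ^+ lift ord0 i * z (n - lift ord0 i)%N
   = \sum_(i < n) Df f (lift ord0 i).+1 * x ^+ lift ord0 i * z (n - lift ord0 i)%N.
  by apply: eq_bigr => i _.
have e2 : \sum_(i < n.+1) Df f (lift ord0 i) * x ^+ lift ord0 i * z (n.+1 - lift ord0 i)%N
   = \sum_(i < n.+1) Df f i.+1 * x ^+ i.+1 * z (n - i)%N.
  by apply: eq_bigr => i _.
rewrite e1 e2 big_ord_recl /= subn0.
set S := \sum_(i < n) _.
set S' := \sum_(i < n) _.
have -> : S' = x * S.
  by rewrite /S /S' mulr_sumr; apply: eq_bigr => i _; rewrite exprS; ring.
ring.
Qed.

End Exp.

Section Sums.
Variable R : realType.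


Lemma sum_sub_le (A : eqType) (s t : seq A) (F : A -> R) :
  uniq s -> uniq t -> {subset s <= t} -> (forall a, 0 <= F a) ->
  \sum_(a <- s) F a <= \sum_(a <- t) F a.
Proof.
move=> us ut sub F0; rewrite [X in _ <= X](bigID (fun a => a \in s)) /=.
rewrite -[X in X <= _]addr0; apply: lerD; last by apply: sumr_ge0.
have pe : perm_eq [seq a <- t | a \in s] s.
  apply: uniq_perm => //; first exact: filter_uniq.
  by move=> a; rewrite mem_filter; case as_: (a \in s) => //=; rewrite sub.
by rewrite -[X in _ <= X]big_filter (perm_big _ pe).
Qed.

Lemma sum_pair_le (A B : eqType) (s : seq (A * B)) (f : A -> R) (g : B -> R) :
  uniq s -> (forall a, 0 <= f a) -> (forall b, 0 <= g b) ->
  \sum_(p <- s) f p.1 * g p.2 <=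
  (\sum_(a <- undup (map fst s)) f a) * (\sum_(b <- undup (map snd s)) g b).
Proof.
move=> us f0 g0.
have -> : (\sum_(a <- undup (map fst s)) f a) * (\sum_(b <- undup (map snd s)) g b)
   = \sum_(p <- [seq (a, b) | a <- undup (map fst s), b <- undup (map snd s)]) f p.1 * g p.2.
  rewrite big_allpairs mulr_suml; apply: eq_bigr => a _.
  by rewrite mulr_sumr.
apply: sum_sub_le => //.
- apply: allpairs_uniq; try exact: undup_uniq.
  by move=> [a1 b1] [a2 b2] _ _ /=.
- move=> [a b] pin; apply/allpairsP; exists (a, b) => /=; split => //.
    by rewrite mem_undup; apply/mapP; exists (a, b).
  by rewrite mem_undup; apply/mapP; exists (a, b).
- by move=> p; apply: mulr_ge0.
Qed.

Lemma geom_le (r : R) N : 0 <= r < 1 -> \sum_(i < N) r ^+ i <= (1 - r)^-1.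
Proof.
move=> /andP[r0 r1]; have h : 0 < 1 - r by rewrite subr_gt0.
elim: N => [|N IH]; first by rewrite big_ord0 invr_ge0 ltW.
rewrite big_ord_recl expr0.
have -> : \sum_(i < N) r ^+ (bump 0 i) = r * \sum_(i < N) r ^+ i.
  by rewrite mulr_sumr; apply: eq_bigr => i _; rewrite exprS.
apply: (@le_trans _ _ (1 + r * (1 - r)^-1)); first by rewrite lerD2l ler_wpM2l.
rewrite -(@ler_pM2r _ (1 - r)) // mulVf ?gt_eqF // mulrDl mul1r -mulrA mulVf ?gt_eqF //.
lra.
Qed.

Lemma geom_seq_le (r : R) (t : seq nat) : 0 <= r < 1 -> uniq t ->
  \sum_(i <- t) r ^+ i <= (1 - r)^-1.
Proof.
move=> hr ut; set N := (\max_(i <- t) i).+1.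
apply: le_trans (geom_le N hr).
rewrite -(big_mkord xpredT (fun i => r ^+ i)) /index_iota subn0.
apply: sum_sub_le => //; first exact: iota_uniq.
  move=> i it; rewrite mem_iota add0n /N ltnS leq0n /=.
  exact: (leq_bigmax_seq (F := id)).
by move=> i; apply: exprn_ge0; case/andP: hr.
Qed.

End Sums.

Section ModeBound.
Variable R : realType.
Variables a1 a2 a3 V beta : R.
Hypothesis hV : 0 < V.
Hypothesis hbeta : 0 < beta.

Let e := eigE a1 a2 a3 V.
Let d (a : R) := beta * (pi ^+ 2 / 2) * V `^ (- (2 * a)).
Let r (a : R) := expR (- d a).

Lemma d_pos a : 0 < d a.
Proof.
apply: mulr_gt0; [apply: mulr_gt0 => //| exact: powR_gt0].
by apply: divr_gt0 => //; apply: exprn_gt0; exact: pi_gt0.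
Qed.

Lemma r_bnd a : 0 <= r a < 1.
Proof. by rewrite expR_ge0 /= expR_lt1 oppr_lt0 d_pos. Qed.

Lemma xw_split (k : mode) : xw e beta k =
  expR ((k.1.1.+1%:R) ^+ 2 * - d a1) * expR ((k.1.2.+1%:R) ^+ 2 * - d a2) *
  expR ((k.2.+1%:R) ^+ 2 * - d a3).
Proof.
rewrite /xw -!expRD; congr expR; rewrite /e /eigE /d; ring.
Qed.

Lemma expR_sq_le (n : nat) (a : R) :
  expR ((n.+1%:R) ^+ 2 * - d a) <= r a ^+ n.
Proof.
rewrite /r -expRM_natl ler_expR.
have := d_pos a; have : (0 <= n%:R :> R) by [].
rewrite -natr1; move: (n%:R) => y y0 dp; nra.
Qed.

Lemma expR_sq_le1 (n : nat) (a : R) :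
  expR ((n.+1%:R) ^+ 2 * - d a) <= r a.
Proof.
rewrite /r ler_expR.
have := d_pos a; have : (0 <= n%:R :> R) by [].
rewrite -natr1; move: (n%:R) => y y0 dp; nra.
Qed.

Lemma expR_sq_le_one (n : nat) (a : R) :
  expR ((n.+1%:R) ^+ 2 * - d a) <= 1.
Proof. apply: le_trans (expR_sq_le1 n a) _; by case/andP: (r_bnd a) => _ /ltW. Qed.

Lemma xw_le_prod (k : mode) :
  xw e beta k <= r a1 ^+ k.1.1 * r a2 ^+ k.1.2 * r a3 ^+ k.2.
Proof.
rewrite xw_split; apply: ler_pM; [apply: mulr_ge0; exact: expR_ge0 | exact: expR_ge0 | |].
  apply: ler_pM; [exact: expR_ge0 | exact: expR_ge0 | exact: expR_sq_le | exact: expR_sq_le].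
exact: expR_sq_le.
Qed.

Lemma xw_le_r1 (k : mode) : xw e beta k <= r a1.
Proof.
rewrite xw_split -[X in _ <= X]mulr1 -[X in _ <= X * _]mulr1.
apply: ler_pM; [apply: mulr_ge0; exact: expR_ge0 | exact: expR_ge0 | |].
  apply: ler_pM; [exact: expR_ge0 | exact: expR_ge0 | exact: expR_sq_le1 | exact: expR_sq_le_one].
exact: expR_sq_le_one.
Qed.

Definition Kb := (1 - r a1)^-1 * (1 - r a2)^-1 * (1 - r a3)^-1.

Lemma sum_xw_le (s : seq mode) : uniq s -> \sum_(k <- s) xw e beta k <= Kb.
Proof.
move=> us.
have r1 := r_bnd a1; have r2 := r_bnd a2; have r3 := r_bnd a3.
have rge0 a : 0 <= r a by case/andP: (r_bnd a).
apply: (@le_trans _ _ (\sum_(k <- s) (r a1 ^+ k.1.1 * r a2 ^+ k.1.2) * r a3 ^+ k.2)).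
  by apply: ler_sum => k _; exact: xw_le_prod.
apply: le_trans (sum_pair_le (f := fun u : nat * nat => r a1 ^+ u.1 * r a2 ^+ u.2)
                   (g := fun l => r a3 ^+ l) us _ _) _.
- by move=> u; apply: mulr_ge0; apply: exprn_ge0.
- by move=> l; apply: exprn_ge0.
apply: ler_pM.
- by apply: sumr_ge0 => u _; apply: mulr_ge0; apply: exprn_ge0.
- by apply: sumr_ge0 => u _; apply: exprn_ge0.
- apply: le_trans (sum_pair_le (f := fun i => r a1 ^+ i) (g := fun j => r a2 ^+ j)
                   (undup_uniq _) _ _) _.
  + by move=> i; apply: exprn_ge0.
  + by move=> i; apply: exprn_ge0.
  apply: ler_pM.
  + by apply: sumr_ge0 => u _; apply: exprn_ge0.
  + by apply: sumr_ge0 => u _; apply: exprn_ge0.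
  + exact: geom_seq_le (undup_uniq _).
  + exact: geom_seq_le (undup_uniq _).
- exact: geom_seq_le (undup_uniq _).
Qed.

Definition Bb := expR (Kb / (1 - r a1)).

Lemma zr_bound (s : seq mode) n : uniq s -> zr (xw e beta) s n <= Bb.
Proof.
move=> us.
have xp : forall a, 0 < xw e beta a by move=> a; exact: xw_pos.
have r1 := r_bnd a1; case/andP: r1 => r10 r11.
apply: (@le_trans _ _ (\sum_(m < n.+1) zr (xw e beta) s m)).
  rewrite big_ord_recr /= lerDr; apply: sumr_ge0 => i _; exact: zr_ge0.
apply: le_trans (zr_sum_prod (s:=s) xp n.+1 _) _.
  by move=> a _; apply: le_lt_trans (xw_le_r1 a) r11.
apply: le_trans (prod_exp_bound (s:=s) xp r11 _) _.
  by move=> a _; exact: xw_le_r1.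
rewrite ler_expR ler_pM2r ?invr_gt0 ?subr_gt0 //.
exact: sum_xw_le.
Qed.

End ModeBound.

Lemma DnT n : Dn (fun _ : mode => true) n = [set m : multiset mode | nparticles m = n]%classic.
Proof. by apply/seteqP; split => m /= [] // h _; split. Qed.

Lemma ctraceE (R : realType) a1 a2 a3 V beta n k (f : nat -> R) :
  ctrace a1 a2 a3 V beta n (fun m => f (m k)) = Phi (eigE a1 a2 a3 V) beta k n f.
Proof. by rewrite /ctrace /Phi /Psi DnT. Qed.

Lemma ZcanE (R : realType) a1 a2 a3 V beta n :
  Zcan a1 a2 a3 V beta n = Psi (fun _ => true) n (W (eigE a1 a2 a3 V) beta) :> \bar R.
Proof.
rewrite /Zcan /ctrace /Psi DnT; apply: eq_esum => m _; by rewrite mul1r.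
Qed.

Unset Implicit Arguments.
Theorem theorem3p1 (R : realType) (a1 a2 a3 V beta : R)
  (ha12 : a2 <= a1) (ha23 : a3 <= a2) (ha3 : 0 < a3)
  (hsum : a1 + a2 + a3 = 1) (hV : 0 < V) (hbeta : 0 < beta) (k : mode) :
  (forall lambda : R, 0 < lambda ->
     forall n1 n2 : nat, n1%:R / V <= n2%:R / V ->
       cexp a1 a2 a3 V beta n2 k (fun N => expR (- lambda * N%:R))
       <= cexp a1 a2 a3 V beta n1 k (fun N => expR (- lambda * N%:R)))
  /\
  (forall r : nat, (1 <= r)%N ->
     forall n1 n2 : nat, n1%:R / V <= n2%:R / V ->
       cexp a1 a2 a3 V beta n1 k (fun N => (N%:R) ^+ r)
       <= cexp a1 a2 a3 V beta n2 k (fun N => (N%:R) ^+ r)).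
Proof.
set e := eigE a1 a2 a3 V.
have [B Hb] : exists B, forall s : seq mode, uniq s -> forall n, zr (xw e beta) s n <= B.
  by exists (Bb a1 a2 a3 V beta) => s us n; exact: (zr_bound a1 a2 a3 hV hbeta n us).
have cexpE n (f : nat -> R) : (forall j, 0 <= f j) ->
    cexp a1 a2 a3 V beta n k f = Cx (zz e beta) (xw e beta k) n f.
  move=> f0; rewrite /cexp ctraceE ZcanE (Phi_closed Hb) //.
have zp := fun n => zz_pos Hb k n.
have zQ := zz_QP Hb.
have xp := xw_pos e beta k.
have nle n1 n2 : n1%:R / V <= n2%:R / V -> (n1 <= n2)%N.
  by rewrite ler_pM2r ?invr_gt0 // ler_nat.
split.
- move=> lam lp n1 n2 /nle n12.
  rewrite !cexpE; try by move=> j; exact: expR_ge0.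
  rewrite -lerN2 -!Cx_opp.
  apply: Cx_chain => // j /=.
  rewrite opprK addrC subr_ge0 ler_expR -natr1; nra.
- move=> r r1 n1 n2 /nle n12.
  rewrite !cexpE; try by move=> j; exact: exprn_ge0.
  apply: Cx_chain => // j /=.
  by rewrite subr_ge0 -!natrX ler_nat leq_exp2r.
Qed.
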